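(* For each $r\in\{22,24,26\}$ there exists a binary linear $[n,n-r,3]_2 2$ code with $n=53\cdot 2^{r/2-5}-3$, i.e. of lengths $3389$, $6781$, $13565$ respectively. Consequently $\ell_2(22,2)\le 3389$, $\ell_2(24,2)\le 6781$, $\ell_2(26,2)\le 13565$.
   Context: An $[n,n-r,d]_2R$ code is a binary linear code of length $n$, codimension $r$, minimum distance $d$, and covering radius $R$ (the smallest $R$ such that every vector of $\mathbb{F}_2^r$ is a sum of at most $R$ columns of a parity-check matrix). $\ell_2(r,R)$ denotes the smallest length of a binary linear code of codimension $r$ and covering radius $R$. *)

(* Defs.v *)
From HB Require Import structures.
From mathcomp Require Import all_boot all_order all_algebra.
Set Implicit Arguments. Unset Strict Implicit. Unset Printing Implicit Defensive.
Import GRing.Theory.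
Local Open Scope ring_scope.

Definition codeword (r n : nat) (H : 'M['F_2]_(r, n)) (c : 'rV['F_2]_n) : Prop :=
  H *m c^T = 0.

Definition wt (n : nat) (c : 'rV['F_2]_n) : nat := #|[set j | c 0 j != 0]|.

Definition min_dist_is (r n : nat) (H : 'M['F_2]_(r, n)) (d : nat) : Prop :=
  (exists c, codeword H c /\ c <> 0 /\ wt c = d) /\
  (forall c, codeword H c -> c <> 0 -> (d <= wt c)%N).

Definition covers_within (r n : nat) (H : 'M['F_2]_(r, n)) (R : nat) : Prop :=
  forall s : 'cV['F_2]_r,
    exists S : {set 'I_n}, (#|S| <= R)%N /\ s = \sum_(j in S) col j H.

Definition covering_radius_is (r n : nat) (H : 'M['F_2]_(r, n)) (R : nat) : Prop :=
  covers_within H R /\ (forall R', covers_within H R' -> (R <= R')%N).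

(* H is a parity-check matrix of an [n, n-r, d]_2 R code (codimension r). *)
Definition is_code (n r d R : nat) (H : 'M['F_2]_(r, n)) : Prop :=
  \rank H = r /\ min_dist_is H d /\ covering_radius_is H R.

(* l_2(r, R) <= N : some binary linear code of codimension r and covering
   radius R has length at most N (l_2 is the least such length). *)
Definition ell2_le (r R N : nat) : Prop :=
  exists n, (n <= N)%N /\
    exists H : 'M['F_2]_(r, n), \rank H = r /\ covering_radius_is H R.

(* Main.v *)
Require Import Defs.
From HB Require Import structures.
From mathcomp Require Import all_boot all_order all_algebra.
From mathcomp Require Import fingroup morphism abelian finalg finfield.
From mathcomp Require Import ring zify.
From Stdlib Require Import Lia.
Set Implicit Arguments. Unset Strict Implicit. Unset Printing Implicit Defensive.
Import GRing.Theory.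

Local Open Scope ring_scope.

Lemma F2_cases (x : 'F_2) : x = 0 \/ x = 1.
Proof. case: x => [[|[|k]] Hk]; [left|right|]; try by apply: val_inj. by []. Qed.
Lemma F2_add_self (x : 'F_2) : x + x = 0.
Proof. by case: (F2_cases x) => ->; apply: val_inj. Qed.
Lemma F2_nat (x : 'F_2) : ((x != 0) : nat)%:R = x.
Proof. by case: (F2_cases x) => ->; rewrite ?eqxx ?oner_eq0. Qed.
Lemma F2_one_neq0 : (1 : 'F_2) != 0.
Proof. by rewrite oner_eq0. Qed.

Lemma mx_add_self (r c : nat) (v : 'M['F_2]_(r, c)) : v + v = 0.
Proof. by apply/matrixP => i j; rewrite !mxE F2_add_self. Qed.

Lemma mx_add_eq0 (r c : nat) (a b : 'M['F_2]_(r, c)) : a + b = 0 -> a = b.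
Proof. by move=> h; rewrite -[b]add0r -h -addrA mx_add_self addr0. Qed.

Lemma mul_sum (r n : nat) (H : 'M['F_2]_(r, n)) (w : 'rV['F_2]_n) :
  H *m w^T = \sum_(j in [set j | w 0 j != 0]) col j H.
Proof.
apply/colP => i; rewrite !mxE summxE [RHS]big_mkcond /=; apply: eq_bigr => j _.
rewrite !mxE inE; case: (F2_cases (w 0 j)) => ->; rewrite ?eqxx ?oner_eq0 /=.
  by rewrite mulr0. by rewrite mulr1.
Qed.

Definition ind_row (n : nat) (S : {set 'I_n}) : 'rV['F_2]_n := \row_j ((j \in S) : nat)%:R.

Lemma ind_row_supp (n : nat) (S : {set 'I_n}) : [set j | ind_row S 0 j != 0] = S.
Proof. by apply/setP => j; rewrite inE mxE; case: (j \in S); rewrite ?eqxx ?oner_eq0. Qed.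

Lemma sum_ind (r n : nat) (H : 'M['F_2]_(r, n)) (S : {set 'I_n}) :
  \sum_(j in S) col j H = H *m (ind_row S)^T.
Proof. by rewrite mul_sum ind_row_supp. Qed.

Definition covers2 (r : nat) (T : {set 'cV['F_2]_r}) :=
  forall t, exists a b, ((a == 0) || (a \in T)) /\ ((b == 0) || (b \in T)) /\ t = a + b.

Definition has_triple (r : nat) (T : {set 'cV['F_2]_r}) :=
  exists a b c, [/\ a \in T, b \in T, c \in T, [/\ a != b, a != c & b != c] & a + b + c = 0].


Lemma code_of_set (r : nat) (T : {set 'cV['F_2]_r}) :
  0 \notin T -> covers2 T -> has_triple T -> (#|T|.+2 <= 2 ^ r)%N ->
  exists H : 'M['F_2]_(r, #|T|), is_code 3 2 H.
Proof.
move=> T0 cov tri cardT.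
pose H : 'M['F_2]_(r, #|T|) := \matrix_(i, j) (enum_val j : 'cV_r) i 0.
have colH j : col j H = enum_val j.
  by apply/colP => i; rewrite !mxE.
have inT (j : 'I_#|T|) : enum_val j \in T by exact: (enum_valP j).
have idx v : v \in T -> exists j : 'I_#|T|, enum_val j = v.
  by move=> Hv; exists (enum_rank_in Hv v); rewrite enum_rankK_in.
have single a : (a == 0) || (a \in T) ->
    exists S : {set 'I_#|T|}, (#|S| <= 1)%N /\ a = \sum_(j in S) col j H.
  case/orP => [/eqP -> | /idx [j <-]].
    by exists set0; rewrite cards0 big_set0.
  by exists [set j]; rewrite cards1 big_set1 colH.
have cov2 : covers_within H 2.
  move=> s; have [a [b [Ha [Hb ->]]]] := cov s.
  case: (a =P b) => [<- | ab].
    by exists set0; rewrite cards0 big_set0 mx_add_self.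
  case/orP: (Ha) => [/eqP a0 | aT].
    have [S [HS ->]] := single b Hb; exists S; split; last by rewrite a0 add0r.
    exact: leq_trans HS _.
  case/orP: (Hb) => [/eqP b0 | bT].
    have [S [HS ->]] := single a Ha; exists S; split; last by rewrite b0 addr0.
    exact: leq_trans HS _.
  have [ja Ea] := idx a aT; have [jb Eb] := idx b bT.
  have jab : ja != jb by apply/eqP => E; apply: ab; rewrite -Ea -Eb E.
  exists [set ja; jb]; rewrite cards2 jab; split => //.
  by rewrite big_setU1 ?inE //= big_set1 !colH Ea Eb.
have rkH : \rank H = r.
  apply/eqP; rewrite eqn_leq rank_leq_row /= -mxrank_tr.
  have sub : (1%:M <= H^T)%MS.
    apply/row_subP => i.
    have [S [_ ES]] := cov2 (row i 1%:M)^T.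
    rewrite -[row i _]trmxK ES sum_ind trmx_mul trmxK; exact: submxMl.
  by have := mxrankS sub; rewrite mxrank1.
exists H; rewrite /is_code; split; first exact: rkH.
split.
  rewrite /min_dist_is; split.
    have [a [b [c [aT bT cT [ab ac bc] abc]]]] := tri.
    have [ja Ea] := idx a aT; have [jb Eb] := idx b bT; have [jc Ec] := idx c cT.
    have neq (x y : 'cV['F_2]_r) (jx jy : 'I_#|T|) : x != y -> enum_val jx = x -> enum_val jy = y -> jx != jy.
      by move=> xy Ex Ey; apply/eqP => E; move/eqP: xy; apply; rewrite -Ex -Ey E.
    have jab := neq _ _ _ _ ab Ea Eb; have jac := neq _ _ _ _ ac Ea Ec.
    have jbc := neq _ _ _ _ bc Eb Ec.
    pose J := [set ja; jb; jc].
    exists (ind_row J); split; last split.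
    - rewrite /codeword -sum_ind /J -setUA big_setU1 ?inE ?negb_or ?jab ?jac //=.
      by rewrite big_setU1 ?inE ?jbc //= big_set1 !colH Ea Eb Ec addrA.
    - move/matrixP/(_ 0 ja); rewrite !mxE !inE eqxx /= => /eqP.
      by rewrite oner_eq0.
    - rewrite /wt ind_row_supp /J -setUA cardsU1 cardsU1 cards1 !inE.
      by rewrite negb_or jab jac jbc.
  move=> w cw w0; rewrite /wt; set J := [set j | w 0 j != 0].
  have HJ : \sum_(j in J) col j H = 0 by rewrite -mul_sum.
  rewrite leqNgt; apply/negP => lt3.
  have : [|| #|J| == 0, #|J| == 1 | #|J| == 2].
    by move: lt3; case: #|J| => [|[|[|k]]].
  case/or3P => [/eqP/cards0_eq J0 | /cards1P [j Jj] | /cards2P [x [y [xy Jxy]]]].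
  - apply: w0; apply/matrixP => i j; rewrite !mxE ord1.
    have : j \notin J by rewrite J0 inE.
    by rewrite inE negbK => /eqP.
  - move: HJ; rewrite Jj big_set1 colH => E.
    by move: (inT j); rewrite E (negbTE T0).
  - move: HJ; rewrite Jxy big_setU1 ?inE //= big_set1 !colH => /mx_add_eq0 /enum_val_inj E.
    by move/eqP: xy.
split=> // R' covR'; rewrite leqNgt; apply/negP => lt2.
have all_in : forall s : 'cV['F_2]_r, s \in 0 |: T.
  move=> s; have [S [HS Es]] := covR' s.
  have HS1 : (#|S| <= 1)%N by apply: leq_trans HS _; rewrite -ltnS.
  have : (#|S| == 0) || (#|S| == 1) by move: HS1; case: #|S| => [|[|k]].
  case/orP => [/eqP/cards0_eq S0 | /cards1P [j Sj]].
    by rewrite Es S0 big_set0 setU11.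
  by rewrite Es Sj big_set1 colH setU1r.
have : (#|[set: 'cV['F_2]_r]| <= #|0%R |: T|)%N.
  by apply: subset_leq_card; apply/subsetP => s _; apply: all_in.
rewrite cardsT card_mx card_Fp // muln1 cardsU1 (negbTE T0) add1n.
by rewrite leqNgt cardT.
Qed.

Fixpoint xorl (l1 l2 : seq bool) : seq bool :=
  match l1, l2 with
  | a :: t1, b :: t2 => xorb a b :: xorl t1 t2
  | [::], l => l
  | l, [::] => l
  end.
Fixpoint all_lists (k : nat) : seq (seq bool) :=
  match k with
  | 0 => [:: [::]]
  | k.+1 => [seq false :: l | l <- all_lists k] ++ [seq true :: l | l <- all_lists k]
  end.
Fixpoint eqbl (l1 l2 : seq bool) : bool :=
  match l1, l2 with
  | a :: t1, b :: t2 => (eqb a b) && eqbl t1 t2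
  | [::], [::] => true
  | _, _ => false
  end.

Lemma eqblP l1 l2 : eqbl l1 l2 -> l1 = l2.
Proof.
elim: l1 l2 => [|a t IH] [|b u] //= /andP [/eqP -> /IH ->] //.
Qed.

Lemma nth_xorl l1 l2 i : nth false (xorl l1 l2) i = xorb (nth false l1 i) (nth false l2 i).
Proof.
elim: l1 l2 i => [|a t IH] [|b u] [|i] //=.
all: try by case: a.
all: try by case: b.
all: try exact: IH.
all: by case: (nth false t i).
Qed.

Lemma mem_all_lists l : l \in all_lists (size l).
Proof.
elim: l => [|[] l IH] /=; rewrite ?inE // mem_cat.
  by rewrite (map_f (fun l => true :: l)) ?orbT.
by rewrite (map_f (fun l => false :: l)).
Qed.

Definition vec (r : nat) (l : seq bool) : 'cV['F_2]_r := \col_(i < r) ((nth false l i : nat)%:R).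

Lemma natr_xorb (a b : bool) : ((xorb a b : nat)%:R : 'F_2) = (a : nat)%:R + (b : nat)%:R.
Proof. by case: a; case: b; rewrite /= ?addr0 ?add0r //; apply: val_inj. Qed.

Lemma vec_xor r l1 l2 : vec r (xorl l1 l2) = vec r l1 + vec r l2.
Proof. by apply/colP => i; rewrite !mxE nth_xorl natr_xorb. Qed.

Definition list_of (r : nat) (s : 'cV['F_2]_r) : seq bool := [seq s i 0 != 0 | i <- enum 'I_r].

Lemma size_list_of r (s : 'cV['F_2]_r) : size (list_of s) = r.
Proof. by rewrite size_map size_enum_ord. Qed.

Lemma vec_list_of r (s : 'cV['F_2]_r) : vec r (list_of s) = s.
Proof.
apply/colP => i; rewrite mxE /list_of (nth_map i) ?size_enum_ord //.
by rewrite nth_ord_enum F2_nat.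
Qed.

Lemma vec_nseq r k : vec r (nseq k false) = 0.
Proof. by apply/colP => i; rewrite !mxE nth_nseq; case: ifP. Qed.

Lemma vec_neq0 r l (k : 'I_r) : nth false l k -> vec r l != 0.
Proof.
move=> Hk; apply/eqP => /matrixP /(_ k 0); rewrite !mxE Hk => /eqP.
by rewrite oner_eq0.
Qed.
Definition Lbase : seq (seq bool) := [::[::false; true; true; true; true; false; true; true; false; false];
 [::true; false; true; true; true; true; false; false; false; true];
 [::true; true; true; false; true; true; true; true; true; true];
 [::false; true; false; true; false; false; false; false; false; false];
 [::true; true; false; false; false; true; true; true; false; false];
 [::true; true; true; true; true; true; true; false; false; false];
 [::true; true; true; true; true; true; false; false; false; false];
 [::false; false; false; true; true; false; false; true; false; false];
 [::false; false; true; true; false; true; true; false; true; false];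
 [::false; false; false; false; true; false; false; true; true; false];
 [::true; false; true; true; false; false; false; false; true; false];
 [::false; false; true; true; false; false; false; true; false; true];
 [::false; true; true; false; true; false; false; true; true; true];
 [::false; false; true; false; true; true; false; false; false; false];
 [::true; true; true; false; false; true; false; true; false; false];
 [::false; false; true; false; false; true; false; false; false; false];
 [::true; false; false; false; true; true; false; false; false; false];
 [::true; false; true; true; true; false; true; false; false; true];
 [::false; false; true; true; true; true; false; false; false; false];
 [::true; false; true; false; false; true; false; true; false; true];
 [::false; true; false; false; true; false; false; false; true; false];
 [::false; true; true; true; false; false; true; false; false; true];
 [::true; false; true; true; true; false; false; false; true; false];
 [::true; true; false; true; true; true; true; true; false; false];
 [::false; false; false; false; true; true; true; true; true; true];
 [::false; false; false; false; true; true; true; true; false; true];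
 [::false; true; false; false; true; false; false; true; true; false];
 [::true; false; true; false; true; false; false; true; true; false];
 [::false; false; true; false; false; true; true; true; true; true];
 [::true; false; true; true; true; false; false; false; false; true];
 [::false; false; false; false; true; true; true; false; true; true];
 [::false; false; true; true; false; false; true; true; false; false];
 [::true; true; false; true; true; false; false; false; true; false];
 [::false; false; true; false; false; true; false; false; false; true];
 [::true; true; true; false; false; false; false; false; false; true];
 [::false; true; false; false; false; false; true; false; true; true];
 [::true; false; false; false; true; false; false; false; false; true];
 [::true; false; true; true; false; true; false; false; true; true];
 [::false; true; false; true; true; true; false; true; false; false];
 [::true; true; true; true; true; true; true; true; false; false];
 [::false; true; false; true; true; false; true; true; true; false];
 [::false; true; false; true; false; false; true; false; true; false];
 [::true; false; true; true; true; false; false; true; false; true];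
 [::false; true; false; false; false; false; true; true; true; false];
 [::true; false; true; false; false; false; false; false; true; false];
 [::false; false; true; false; true; false; true; false; false; false];
 [::false; true; true; false; false; true; false; true; true; true];
 [::true; false; false; false; true; true; true; true; false; true];
 [::true; false; false; true; false; true; true; false; false; true];
 [::false; false; false; true; true; true; false; true; true; false]].
Definition base_ok : bool :=
  all (fun l => has (fun a => eqbl a l || has (fun b => eqbl (xorl a b) l) Lbase) Lbase) (all_lists 10).
Lemma base_okT : base_ok = true. Proof. vm_compute. reflexivity. Qed.

Lemma size_Lbase : size Lbase = 50%N. Proof. by []. Qed.

Definition c0 (i : 'I_50) : 'cV['F_2]_10 := vec 10 (nth [::] Lbase i).

Lemma in_Lbase a : a \in Lbase -> exists i : 'I_50, c0 i = vec 10 a.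
Proof.
move=> aL; have lt : (index a Lbase < 50)%N by rewrite -size_Lbase index_mem.
by exists (Ordinal lt); rewrite /c0 /= nth_index.
Qed.

Lemma base_cover (s : 'cV['F_2]_10) :
  (exists i, s = c0 i) \/ (exists i j, s = c0 i + c0 j).
Proof.
have Hm := mem_all_lists (list_of s); rewrite size_list_of in Hm.
have := base_okT; rewrite /base_ok => /allP /(_ (list_of s) Hm).
case/hasP => a aL /orP [/eqblP Ha | /hasP [b bL /eqblP Hb]].
  left; have [i Ei] := in_Lbase aL; exists i; by rewrite Ei Ha vec_list_of.
right; have [i Ei] := in_Lbase aL; have [j Ej] := in_Lbase bL.
by exists i, j; rewrite Ei Ej -vec_xor Hb vec_list_of.
Qed.

Definition i1 : 'I_50 := Ordinal (isT : (1 < 50)%N).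
Definition i2 : 'I_50 := Ordinal (isT : (7 < 50)%N).
Definition i3 : 'I_50 := Ordinal (isT : (19 < 50)%N).

Lemma base_triple : [/\ c0 i1 + c0 i2 + c0 i3 = 0, c0 i1 != 0, c0 i2 != 0 & c0 i3 != 0].
Proof.
split.
- rewrite /c0 -!vec_xor.
  have -> : xorl (xorl (nth [::] Lbase i1) (nth [::] Lbase i2)) (nth [::] Lbase i3) = nseq 10 false
    by vm_compute; reflexivity.
  exact: vec_nseq.
- by apply: (@vec_neq0 _ _ (Ordinal (isT : (0 < 10)%N))); vm_compute.
- by apply: (@vec_neq0 _ _ (Ordinal (isT : (3 < 10)%N))); vm_compute.
- by apply: (@vec_neq0 _ _ (Ordinal (isT : (0 < 10)%N))); vm_compute.
Qed.

Lemma field_iso (m : nat) : (0 < m)%N ->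
  exists (F : finFieldType) (phi : F -> 'cV['F_2]_m),
    (forall x y, phi (x + y) = phi x + phi y) /\ (forall v, exists x, phi x = v) /\ #|F| = (2 ^ m)%N.
Proof.
move=> m0.
have [F0 chF cardF] := pPrimePowerField (p:=2) (k:=m) isT m0.
pose R := pPrimeCharType chF.
have /isog_isom/=[f /isomP[injf im_f]]: [set: R] \isog [set: 'rV['F_2]_m].
  rewrite (@isog_abelem_card _ _ 2) fin_Fp_lmod_abelem //=.
  by rewrite !cardsT card_mx mul1n card_Fp // cardF.
exists F0, (fun x => (f x)^T); split; last split => //.
- move=> x y. rewrite -raddfD /=. congr (_^T).
  have := morphM f (in_setT x) (in_setT y). by rewrite FinRing.zmodMgE => ->.
- move=> v. have : v^T \in (f @* [set: R])%g by rewrite im_f inE.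
  case/morphimP => x _ _ Hv. by exists x; rewrite -Hv trmxK.
Qed.

Definition gcol (m n0 : nat) (F : finFieldType) (phi : F -> 'cV['F_2]_m)
  (c : 'I_n0 -> 'cV['F_2]_10) (xi : 'I_n0 -> F) (u : ('I_n0 * F) + (F + F)) :
  'cV['F_2]_(10 + (m + m)) :=
  match u with
  | inl (i, b) => col_mx (c i) (col_mx (phi b) (phi (xi i * b)))
  | inr (inl b) => col_mx 0 (col_mx (phi b) 0)
  | inr (inr b) => col_mx 0 (col_mx 0 (phi b))
  end.

Lemma construct (m n0 : nat) (F : finFieldType) (phi : F -> 'cV['F_2]_m)
  (c : 'I_n0 -> 'cV['F_2]_10) (xi : 'I_n0 -> F) :
  (forall x y, phi (x + y) = phi x + phi y) -> (forall v, exists x, phi x = v) ->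
  injective xi ->
  (forall s, (exists i, s = c i) \/ (exists i j, s = c i + c j)) ->
  forall t, exists u v, t = gcol phi c xi u + gcol phi c xi v.
Proof.
move=> phiD phiS xiI base t.
have phi0 : phi 0 = 0.
  have h := phiD 0 0; rewrite addr0 -{1}[phi 0]addr0 in h; symmetry; exact: (addrI _ h).
have phiB x y : phi (x - y) = phi x - phi y.
  by apply/eqP; rewrite eq_sym subr_eq -phiD subrK.
rewrite -(vsubmxK t) -(vsubmxK (dsubmx t)).
set s := usubmx t; set x' := usubmx _; set y' := dsubmx (dsubmx t).
have [x <-] := phiS x'; have [y <-] := phiS y'.
have zero_case : exists u v, col_mx 0 (col_mx (phi x) (phi y)) = gcol phi c xi u + gcol phi c xi v.
  exists (inr (inl x)), (inr (inr y)); rewrite /= !add_col_mx.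
  by rewrite addr0 add0r addr0.
case: (base s) => [[i ->] | [i [j ->]]].
  exists (inl (i, x)), (inr (inr (y - xi i * x))); rewrite /= !add_col_mx.
  by rewrite !addr0 -phiD addrC subrK.
case: (i =P j) => [<- | ij].
  by rewrite mx_add_self.
have dij : xi i - xi j != 0 by rewrite subr_eq0; apply/eqP => /xiI.
pose be := (xi i - xi j)^-1 * (y - xi j * x).
exists (inl (i, be)), (inl (j, x - be)); rewrite /= !add_col_mx -!phiD.
congr (col_mx _ (col_mx (phi _) (phi _))).
  by rewrite addrC subrK.
have E : (xi i - xi j) * be = y - xi j * x by rewrite /be mulrA mulfV // mul1r.
rewrite -[y](subrK (xi j * x)) -E; ring.
Qed.

Local Close Scope ring_scope.

Lemma pad (X : finType) (A B : {set X}) k :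
  A \subset B -> #|A| <= k <= #|B| -> exists T : {set X}, [/\ A \subset T, T \subset B & #|T| = k].
Proof.
move=> AB /andP [Ak kB].
have [d Hk] : exists d, k = #|A| + d by exists (k - #|A|); rewrite subnKC.
elim: d A AB Ak Hk => [|d IH] A AB Ak Hk.
  by exists A; rewrite Hk addn0.
have lt : #|A| < #|B| by apply: leq_trans kB; rewrite Hk -addSnnS leq_addr.
have [x xBA] : exists x, x \in B :\: A.
  apply/set0Pn; rewrite setD_eq0; apply: contraL lt => /subset_leq_card.
  by rewrite leqNgt.
move: xBA; rewrite inE => /andP [xA xB].
have AB' : x |: A \subset B by rewrite subUset sub1set xB AB.
have Ak' : #|x |: A| <= k by rewrite cardsU1 xA add1n Hk -addSnnS leq_addr.
have Hk' : k = #|x |: A| + d by rewrite cardsU1 xA add1n Hk addSnnS.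
have [T [AT TB HT]] := IH (x |: A) AB' Ak' Hk'.
by exists T; split => //; apply: subset_trans AT; apply: subsetUr.
Qed.



Local Open Scope ring_scope.
Lemma covers2_mono (r : nat) (A B : {set 'cV['F_2]_r}) : A \subset B -> covers2 A -> covers2 B.
Proof.
move=> AB cA t; have [a [b [Ha [Hb E]]]] := cA t; exists a, b; split; last split=> //.
  by case/orP: Ha => [-> // | /(subsetP AB) ->]; rewrite orbT.
by case/orP: Hb => [-> // | /(subsetP AB) ->]; rewrite orbT.
Qed.



Local Close Scope ring_scope.
Lemma final (m : nat) : 6 <= m ->
  (exists H : 'M['F_2]_(10 + (m + m), 53 * 2 ^ m - 3), is_code 3 2 H) /\
  ell2_le (10 + (m + m)) 2 (53 * 2 ^ m - 3).
Proof.
move=> m6; have m0 : 0 < m by apply: leq_trans m6.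
have [F [phi [phiD [phiS cardF]]]] := field_iso m0.
have k64 : 64 <= 2 ^ m by rewrite -[64]/(2 ^ 6) leq_pexp2l.
have le50 : 50 <= #|F| by rewrite cardF; apply: leq_trans k64.
pose xi (i : 'I_50) : F := enum_val (widen_ord le50 i).
have xiI : injective xi.
  move=> i j; rewrite /xi => /enum_val_inj /(congr1 val) E; apply: val_inj; exact: E.
have cov := construct phiD phiS xiI base_cover.
pose S := [set gcol phi c0 xi u | u in [set: ('I_50 * F) + (F + F)]].
pose T0 := S :\ 0%R.
have cT0 : covers2 T0.
  move=> t; have [u [v E]] := cov t; exists (gcol phi c0 xi u), (gcol phi c0 xi v).
  split; last split => //.
    rewrite /T0 in_setD1 /S (imset_f _ (in_setT u)); by case: (gcol phi c0 xi u == 0%R).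
  rewrite /T0 in_setD1 /S (imset_f _ (in_setT v)); by case: (gcol phi c0 xi v == 0%R).
set N := 53 * 2 ^ m - 3.
have cardS : #|T0| <= N.
  apply: leq_trans (subset_leq_card (subD1set _ _)) _.
  apply: leq_trans (leq_imset_card _ _) _.
  rewrite cardsT card_sum !card_prod card_sum card_ord cardF /N.
  move: k64; set K := 2 ^ m => k64; lia.
have phi0 : phi 0%R = 0%R.
  have h := phiD 0%R 0%R; rewrite GRing.addr0 -{1}[phi 0%R]GRing.addr0 in h.
  symmetry; exact: (GRing.addrI _ h).
have big : N.+2 <= 2 ^ (10 + (m + m)).
  rewrite !expnD /N; move: k64; set K := 2 ^ m => k64; nia.
have sub0 : T0 \subset ~: [set 0%R].
  by apply/subsetP => x; rewrite !inE => /andP [].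
have kB : #|T0| <= N <= #|~: [set (0 : 'cV['F_2]_(10 + (m + m)))%R]|.
  rewrite cardS /= cardsCs setCK cards1 card_mx card_Fp // muln1.
  move: big; set P := 2 ^ _; lia.
have [T [T0T Tnz HT]] := pad sub0 kB.
have gi (i : 'I_50) : gcol phi c0 xi (inl (i, 0%R)) = col_mx (c0 i) 0%R.
  by rewrite /= GRing.mulr0 phi0 col_mx0.
have gT (i : 'I_50) : c0 i != 0%R -> col_mx (c0 i) 0%R \in T.
  move=> nz; apply: (subsetP T0T); rewrite -gi /T0 in_setD1 /S (imset_f _ (in_setT _)) andbT gi.
  apply: contra nz => /eqP E; apply/eqP.
  have E' : col_mx (c0 i) 0%R = col_mx 0%R (0 : 'cV['F_2]_(m + m)) by rewrite E col_mx0.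
  by case: (eq_col_mx E').
have [t0 nz1 nz2 nz3] := base_triple.
have neq (i j k : 'I_50) : (c0 i + c0 j + c0 k = 0)%R -> c0 k != 0%R ->
    col_mx (c0 i) 0%R != col_mx (c0 j) (0 : 'cV['F_2]_(m + m))%R.
  move=> E nz; apply: contra nz => /eqP /eq_col_mx [Eij _].
  by rewrite -E Eij mx_add_self GRing.add0r.
have tri : has_triple T.
  exists (col_mx (c0 i1) 0%R), (col_mx (c0 i2) 0%R), (col_mx (c0 i3) 0%R).
  split; try exact: gT.
    split; first exact: neq t0 nz3.
      apply: (neq _ _ i2) nz2; by rewrite -GRing.addrA [(c0 i3 + c0 i2)%R]GRing.addrC GRing.addrA.
    apply: (neq _ _ i1) nz1; by rewrite GRing.addrC GRing.addrA.
  by rewrite !add_col_mx t0 !GRing.addr0 col_mx0.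
have T0n : (0%R \notin T).
  by apply/negP => /(subsetP Tnz); rewrite !inE eqxx.
have cT : covers2 T := covers2_mono T0T cT0.
have cardT : #|T|.+2 <= 2 ^ (10 + (m + m)) by rewrite HT.
have [H HH] := code_of_set T0n cT tri cardT.
rewrite -HT; split; first by exists H.
exists #|T|; split; first by rewrite HT.
exists H; case: HH => [rk [_ cr]]; by split.
Qed.

Theorem theorem5p5 :
  forall r : nat, r \in [:: 22; 24; 26] ->
    (exists H : 'M['F_2]_(r, 53 * 2 ^ (r %/ 2 - 5) - 3),
        is_code 3 2 H) /\
    ell2_le r 2 (53 * 2 ^ (r %/ 2 - 5) - 3).
Proof.
move=> r; rewrite !inE => /or3P [] /eqP ->.
- exact: (@final 6 isT).
- exact: (@final 7 isT).
- exact: (@final 8 isT).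
Qed.
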